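(* Let $q$ be an odd prime power and let $f(X)\in\mathbb{F}_q[X]$ permute $\mathbb{F}_q$. Then there is no $a\in\mathbb{F}_q$ for which $g_a(X):=\frac{f(X+a)-f(a)}{X}$ permutes $\mathbb{F}_q$. *)

(* Defs.v *)
From HB Require Import structures.
From mathcomp Require Import all_boot all_order all_algebra all_field.
Set Implicit Arguments. Unset Strict Implicit. Unset Printing Implicit Defensive.
Import GRing.Theory.
Local Open Scope ring_scope.

Definition permutes (F : finFieldType) (p : {poly F}) : Prop :=
  bijective (fun x : F => p.[x]).

(* g_a(X) = (f(X + a) - f(a)) / X ; the numerator vanishes at 0, so this
   polynomial division is exact. *)
Definition g_poly (F : finFieldType) (f : {poly F}) (a : F) : {poly F} :=
  (f \Po ('X + a%:P) - (f.[a])%:P) %/ 'X.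

(* Main.v *)
Require Import Defs.
From HB Require Import structures.
From mathcomp Require Import all_boot all_order all_algebra all_field.
From mathcomp Require Import all_fingroup cyclic.
Import GRing.Theory.
Local Open Scope ring_scope.
Lemma wilsonF (F : finFieldType) (hodd : odd #|F|) :
  \prod_(x in predC1 (0:F)) x = -1.
Proof.
have H := finField_genPoly F.
rewrite (bigD1 (0:F)) //= subr0 in H.
have HX : ('X^#|F| - 'X = 'X * ('X^(#|F|.-1) - 1) :> {poly F})%R.
  rewrite mulrBr mulr1 -exprS prednK //.
  by apply/card_gt0P; exists 0.
rewrite HX in H.
have nX : ('X != 0 :> {poly F})%R by rewrite polyX_eq0.
have H2 := mulfI nX H.
have := congr1 (fun p => p.[0]) H2.
rewrite /= horner_prod !hornerE.
have gt1 : (1 < #|F|)%N by apply: finNzRing_gt1.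
rewrite expr0n -subn1 subn_eq0 leqNgt gt1 /= sub0r => ->.
have -> : \prod_(i | i != 0) ('X - i%:P).[0] = \prod_(i in predC1 (0:F)) - i.
  by apply: eq_big => // i _; rewrite hornerD hornerN hornerX hornerC add0r.
rewrite prodrN cardC1 -subn1 -signr_odd oddB ?hodd ?expr0 ?mul1r //.
by apply: ltnW.
Qed.

Lemma cardF0 (F : finFieldType) : (#|F|%:R : F) = 0.
Proof.
have := @expg_cardG _ [set: F] (1%R : F) (in_setT _).
by rewrite FinRing.zmodXgE cardsT.
Qed.

Lemma prod_perm0 (F : finFieldType) (s : F -> F) :
  injective s -> s 0 = 0 ->
  \prod_(x in predC1 (0:F)) s x = \prod_(x in predC1 (0:F)) x.
Proof.
move=> inj s0; rewrite [RHS](reindex_inj inj) /=.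
by apply: eq_bigl => x; rewrite !inE -{2}s0 (inj_eq inj).
Qed.

Theorem proposition6p1 (F : finFieldType) (hodd : odd #|F|) (f : {poly F}) :
  permutes f -> ~ (exists a : F, permutes (g_poly f a)).
Proof.
move=> fb [a gb].
have finj := bij_inj fb; have ginj := bij_inj gb.
set g := g_poly f a in ginj gb.
have key : forall x, f.[x + a] - f.[a] = g.[x] * x.
  move=> x.
  have dv : 'X %| (f \Po ('X + a%:P) - (f.[a])%:P).
    rewrite -(subr0 'X) -polyC0 dvdp_XsubCl /root.
    by rewrite !hornerE horner_comp !hornerE oppr0 add0r subrr.
  have := congr1 (fun p => p.[x]) (divpK dv).
  rewrite /= hornerMX => h; rewrite /g /g_poly h.
  by rewrite !hornerE horner_comp !hornerE.
have g0 : g.[0] = 0.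
  case: gb => gi gK Kg.
  have h := key (gi 0); rewrite Kg mul0r in h.
  move/eqP: h; rewrite subr_eq0 => /eqP /finj.
  move/(canRL (addrK a)); rewrite subrr => h0.
  by rewrite -{1}h0 Kg.
have s2inj : injective (fun x => f.[x + a] - f.[a]).
  by move=> x y /= /addIr /finj /addIr.
have := @prod_perm0 _ _ s2inj; rewrite /= add0r subrr => /(_ erefl).
under eq_bigr => x _ do rewrite key.
rewrite big_split /= (@prod_perm0 _ _ ginj g0) wilsonF //.
rewrite mulrNN mulr1 => /eqP; rewrite -subr_eq0 opprK => /eqP h2.
have := cardF0 F; rewrite -[#|F|]odd_double_half hodd.
by rewrite natrD -mul2n natrM mulr2n h2 mul0r addr0 mulr1n => /eqP; rewrite oner_eq0.
Qed.
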